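(* Let $n\ge1$, let $L\subseteq\mathbb Z^n$ be a lattice, and let $(\cdot,\cdot)$ be an inner product on $\mathbb R^n$ for which the canonical basis $\vec e_1,\dots,\vec e_n$ is orthogonal, such that $(L,(\cdot,\cdot))$ is a zonotopal lattice. Let $F$ be the span of $L$, let $\pi:\mathbb R^n\to F$ be the $(\cdot,\cdot)$-orthogonal projection, and let $Y=(\pi(\vec e_1),\dots,\pi(\vec e_n))$. Then the oriented matroids $\mathcal M(L)$ and $\mathcal M(Y)$ coincide, i.e. $$\{(\operatorname{sgn}v_1,\dots,\operatorname{sgn}v_n):\vec v\in L\}=\{(\operatorname{sgn}f(\pi(\vec e_1)),\dots,\operatorname{sgn}f(\pi(\vec e_n))): f:F\to\mathbb R\text{ linear}\}.$$
   Context: A lattice $L\subseteq\mathbb Z^n$ is the $\mathbb Z$-span of finitely many linearly independent vectors of $\mathbb Z^n$. The support of $\vec v$ is $\underline{\vec v}=\{i:v_i\ne0\}$. A vector $\vec u\in L$ is elementary if $\vec u\in\{-1,0,+1\}^n\setminus\{\vec 0\}$ and no nonzero vector of $L$ has support strictly contained in $\underline{\vec u}$. $(L,(\cdot,\cdot))$ is a zonotopal lattice if every $\vec v\in L\setminus\{\vec0\}$ has an elementary $\vec u\in L$ with $\underline{\vec u}\subseteq\underline{\vec v}$. The oriented matroid $\mathcal M(L)$ has covectors the sign vectors of vectors of $L$; the oriented matroid $\mathcal M(Y)$ of a vector configuration $Y=(\vec y_1,\dots,\vec y_n)$ has covectors $(\operatorname{sgn}f(\vec y_1),\dots,\operatorname{sgn}f(\vec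 y_n))$ for linear functionals $f$; two oriented matroids coincide if their covector sets are equal. *)

(* Defs.v *)
From HB Require Import structures.
From mathcomp Require Import all_boot all_order all_algebra.
From mathcomp Require Import reals.
Set Implicit Arguments. Unset Strict Implicit. Unset Printing Implicit Defensive.
Import Order.TTheory GRing.Theory Num.Theory.
Local Open Scope ring_scope.

(* A lattice L ⊆ Z^n is given by a generator matrix B whose k rows are
   Z-linearly independent; L = { u *m B | u ∈ Z^k }. *)
Definition Zindep (k n : nat) (B : 'M[int]_(k, n)) : Prop :=
  forall u : 'rV[int]_k, u *m B = 0 -> u = 0.

Definition inL (k n : nat) (B : 'M[int]_(k, n)) (v : 'rV[int]_n) : Prop :=
  exists u : 'rV[int]_k, v = u *m B.

Definition supp (n : nat) (v : 'rV[int]_n) : {set 'I_n} := [set i | v 0 i != 0].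

Definition elementary (k n : nat) (B : 'M[int]_(k, n)) (u : 'rV[int]_n) : Prop :=
  [/\ inL B u,
      (forall i, u 0 i \in [:: -1; 0; 1]),
      u != 0 &
      ~ (exists w : 'rV[int]_n, [/\ inL B w, w != 0 & supp w \proper supp u])].

Definition zonotopal_lattice (k n : nat) (B : 'M[int]_(k, n)) : Prop :=
  forall v : 'rV[int]_n, inL B v -> v != 0 ->
    exists u : 'rV[int]_n, elementary B u /\ supp u \subset supp v.

Definition ip (R : realType) (n : nat) (G : 'M[R]_n) (x y : 'rV[R]_n) : R :=
  (x *m G *m y^T) 0 0.

Definition orth_basis_inner_product (R : realType) (n : nat) (G : 'M[R]_n) : Prop :=
  [/\ G^T = G,
      (forall x : 'rV[R]_n, x != 0 -> 0 < ip G x x) &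
      (forall i j : 'I_n, i != j -> ip G (delta_mx 0 i) (delta_mx 0 j) = 0)].

Definition e_ (R : realType) (n : nat) (i : 'I_n) : 'rV[R]_n := delta_mx 0 i.

Definition inF (R : realType) (k n : nat) (B : 'M[int]_(k, n)) (x : 'rV[R]_n) : Prop :=
  exists a : 'rV[R]_k, x = a *m map_mx (fun z : int => z%:~R) B.

Definition orth_proj (R : realType) (k n : nat) (B : 'M[int]_(k, n)) (G : 'M[R]_n)
  (pi : 'rV[R]_n -> 'rV[R]_n) : Prop :=
  (forall x, inF B (pi x)) /\
  (forall x z, inF B z -> ip G (x - pi x) z = 0).

(* f is (the restriction to F of) a linear functional F -> R *)
Definition linear_on_F (R : realType) (k n : nat) (B : 'M[int]_(k, n))
  (f : 'rV[R]_n -> R) : Prop :=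
  forall (a : R) x y, inF B x -> inF B y -> f (a *: x + y) = a * f x + f y.

Definition covector_L (k n : nat) (B : 'M[int]_(k, n)) (s : {ffun 'I_n -> int}) : Prop :=
  exists v : 'rV[int]_n, inL B v /\ s = [ffun i => sgz (v 0 i)].

Definition covector_Y (R : realType) (k n : nat) (B : 'M[int]_(k, n))
  (Y : 'I_n -> 'rV[R]_n) (s : {ffun 'I_n -> int}) : Prop :=
  exists f : 'rV[R]_n -> R, linear_on_F B f /\ s = [ffun i => sgz (f (Y i))].

(* Main.v *)
Require Import Defs.
From HB Require Import structures.
From mathcomp Require Import all_boot all_order all_algebra.
From mathcomp Require Import reals.
From mathcomp Require Import lra.
Import Order.TTheory GRing.Theory Num.Theory.
Local Open Scope ring_scope.

Lemma clear_den (k : nat) (K : 'M[rat]_k) :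
  exists (D : int) (P : 'M[int]_k), 0 < D /\ map_mx intr P = D%:~R *: K.
Proof.
pose d (p : 'I_k * 'I_k) := denq (K p.1 p.2).
exists (\prod_p d p).
exists (\matrix_(i, j) (numq (K i j) * \prod_(p | p != (i, j)) d p)).
split.
  by apply: prodr_gt0 => p _; rewrite /d denq_gt0.
apply/matrixP => i j; rewrite !mxE rmorphM /= numqE.
rewrite [X in _ = X%:~R * _](bigD1 (i, j)) //= rmorphM /= /d /=.
by rewrite [RHS]mulrC mulrA.
Qed.

Lemma sgz_close (R : realFieldType) (a b M : R) :
  `|a - b| <= M -> M < `|b| -> sgz a = sgz b.
Proof.
rewrite ler_norml => /andP [h1 h2].
case: (ltrgt0P b) => hb.
- move=> hM. rewrite (gtr0_sgz hb) gtr0_sgz //. lra.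
- move=> hM. rewrite (ltr0_sgz hb) ltr0_sgz //. lra.
- move=> hM; exfalso; lra.
Qed.

Lemma rat_approx (R : realType) k n (B : 'M[int]_(k,n)) (w : 'rV[R]_n) :
  inF B w -> exists v, inL B v /\ forall i, sgz (v 0 i) = sgz (w 0 i).
Proof.
case=> a hw.
pose S := [set i | w 0 i != 0].
pose Dg : 'M[int]_n := diag_mx (\row_i ((i \notin S)%:R : int)).
pose C := B *m Dg.
have haC : a *m map_mx intr C = 0 :> 'M[R]_(1,n).
  rewrite /C map_mxM mulmxA -hw map_diag_mx mul_mx_diag; apply/rowP => i; rewrite !mxE.
  case: (boolP (i \in S)) => hi /=.
    by rewrite mulr0.
  by move: hi; rewrite inE negbK => /eqP ->; rewrite mul0r.
pose Kq := kermx (map_mx intr C : 'M[rat]_(k,n)).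
have hK : map_mx ratr Kq = kermx (map_mx intr C : 'M[R]_(k,n)).
  rewrite /Kq map_kermx; congr kermx; apply/matrixP => i j; rewrite !mxE.
  exact: ratr_int.
have : (a <= kermx (map_mx intr C : 'M[R]_(k,n)))%MS by apply/sub_kermxP.
case/submxP => x hax.
have [D [P [D0 hP]]] := clear_den _ Kq.
have hPR : map_mx intr P = D%:~R *: map_mx ratr Kq :> 'M[R]_k.
  have -> : map_mx intr P = map_mx ratr (map_mx intr P : 'M[rat]_k) :> 'M[R]_k.
    by apply/matrixP => i j; rewrite !mxE; rewrite /= ratr_int.
  by rewrite hP map_mxZ /= ratr_int.
have Dn0 : (D%:~R : R) != 0 by rewrite gt_eqF // ltr0z.
pose y := (D%:~R : R)^-1 *: x.
pose Q := P *m B.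
have hwQ : w = y *m map_mx intr Q.
  have hxy : x *m kermx (map_mx intr C : 'M[R]_(k,n)) = y *m map_mx intr P.
    by rewrite hPR -hK /y -scalemxAr -scalemxAl scalerA mulfV // scale1r.
  rewrite hw hax hxy /Q (map_mxM _ P B) mulmxA //.
have hPC : P *m C = 0.
  have h : map_mx intr (P *m C) = 0 :> 'M[rat]_(k,n).
    by rewrite map_mxM hP -scalemxAl mulmx_ker scaler0.
  apply/matrixP => i j; apply: (@intr_inj rat).
  move/matrixP: h => /(_ i j); rewrite !mxE => ->.
  by rewrite rmorph0.
have hQS : forall j i, i \notin S -> Q j i = 0.
  move=> j i hi; move/matrixP: hPC => /(_ j i).
  by rewrite /C mulmxA mul_mx_diag !mxE hi mulr1.
pose M : R := \sum_i \sum_j `|(Q j i)%:~R : R|.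
have M0 : 0 <= M by apply: sumr_ge0 => i _; apply: sumr_ge0 => j _.
pose Nn : R := 1 + \sum_(i in S) M / `|w 0 i|.
have NnS : 0 <= \sum_(i in S) M / `|w 0 i|.
  by apply: sumr_ge0 => i _; apply: divr_ge0.
have Npos : 0 < Nn by rewrite /Nn; lra.
pose z : 'rV[int]_k := \row_j Num.floor (Nn * y 0 j).
exists (z *m Q); split.
  by exists (z *m P); rewrite mulmxA.
move=> i.
have hv : ((z *m Q) 0 i)%:~R = \sum_j (z 0 j)%:~R * (Q j i)%:~R :> R.
  by rewrite !mxE rmorph_sum; apply: eq_bigr => j _; rewrite rmorphM.
have hwi : w 0 i = \sum_j y 0 j * (Q j i)%:~R.
  by rewrite hwQ !mxE; apply: eq_bigr => j _; congr (_ * _); rewrite mxE.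
case: (boolP (i \in S)) => hi; last first.
  rewrite (_ : (z *m Q) 0 i = 0); last first.
    by rewrite mxE big1 // => j _; rewrite hQS // mulr0.
  by move: hi; rewrite inE negbK => /eqP ->; rewrite !sgz0.
have wpos : 0 < `|w 0 i| by rewrite normr_gt0; move: hi; rewrite inE.
rewrite -(sgz_int R) hv -[sgz (w 0 i)]mul1r -(gtr0_sgz Npos) -sgzM.
apply: (@sgz_close R _ _ M).
  rewrite hwi mulr_sumr -sumrB.
  apply: le_trans (ler_norm_sum _ _ _) _.
  apply: (@le_trans _ _ (\sum_j `|(Q j i)%:~R : R|)).
    apply: ler_sum => j _.
    rewrite mulrA -mulrBl normrM ler_piMl //.
    rewrite mxE; have := floor_itv (Nn * y 0 j); rewrite rmorphD /= ler_norml.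
    move=> /andP [h1 h2]; apply/andP; split; lra.
  rewrite /M (bigD1 i) //= lerDl.
  by apply: sumr_ge0 => l _; apply: sumr_ge0.
rewrite normrM (gtr0_norm Npos).
have ht : M / `|w 0 i| <= \sum_(i in S) M / `|w 0 i|.
  rewrite (bigD1 i) //= lerDl.
  by apply: sumr_ge0 => l _; apply: divr_ge0.
have h1 : (1 + M / `|w 0 i|) * `|w 0 i| <= Nn * `|w 0 i|.
  by apply: ler_wpM2r; [exact: ltW | rewrite /Nn; lra].
move: h1; rewrite mulrDl mul1r divfK ?gt_eqF //.
lra.
Qed.

Section IP.
Variables (R : realType) (n : nat) (G : 'M[R]_n).

Lemma ip_delta i j : ip G (e_ R i) (e_ R j) = G i j.
Proof. by rewrite /ip /e_ -rowE trmx_delta -colE !mxE. Qed.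

Lemma ipDl x y z : ip G (x + y) z = ip G x z + ip G y z.
Proof. by rewrite /ip !mulmxDl mxE. Qed.

Lemma ipZl c x z : ip G (c *: x) z = c * ip G x z.
Proof. by rewrite /ip -!scalemxAl mxE. Qed.

Lemma ipBl x y z : ip G (x - y) z = ip G x z - ip G y z.
Proof. by rewrite ipDl -scaleN1r ipZl mulN1r. Qed.

Lemma ip_sum (I : finType) (c : I -> R) (v : I -> 'rV[R]_n) z :
  ip G (\sum_i c i *: v i) z = \sum_i c i * ip G (v i) z.
Proof.
elim/big_rec2: _ => [|i y1 y2 _ h]; first by rewrite /ip !mul0mx mxE.
by rewrite ipDl ipZl ?h -?h.
Qed.

Hypothesis hoff : forall i j : 'I_n, i != j -> G i j = 0.

Lemma ipE x y : ip G x y = \sum_i x 0 i * G i i * y 0 i.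
Proof.
rewrite /ip !mxE; apply: eq_bigr => j _; rewrite !mxE (bigD1 j) //= big1 ?addr0 //.
by move=> i hij; rewrite hoff ?mulr0.
Qed.

Lemma ipC x y : ip G x y = ip G y x.
Proof. by rewrite !ipE; apply: eq_bigr => i _; rewrite [RHS]mulrAC mulrC mulrA. Qed.

Lemma ip_e i z : ip G (e_ R i) z = G i i * z 0 i.
Proof.
rewrite ipE (bigD1 i) //= big1 ?addr0.
  by rewrite /e_ mxE !eqxx mul1r.
by move=> j hj; rewrite /e_ mxE; move: hj; rewrite eq_sym => /negbTE ->; rewrite andbF !mul0r.
Qed.

End IP.

Lemma inF0 (R : realType) k n (B : 'M[int]_(k,n)) : inF B (0 : 'rV[R]_n).
Proof. by exists 0; rewrite mul0mx. Qed.

Lemma inFD (R : realType) k n (B : 'M[int]_(k,n)) (x y : 'rV[R]_n) :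
  inF B x -> inF B y -> inF B (x + y).
Proof. by case=> a -> [b ->]; exists (a + b); rewrite mulmxDl. Qed.

Lemma inFZ (R : realType) k n (B : 'M[int]_(k,n)) c (x : 'rV[R]_n) :
  inF B x -> inF B (c *: x).
Proof. by case=> a ->; exists (c *: a); rewrite scalemxAl. Qed.

Lemma inF_sum (R : realType) k n (B : 'M[int]_(k,n)) (I : finType) (c : I -> R) v :
  (forall i, inF B (v i)) -> inF B (\sum_i c i *: v i).
Proof.
move=> hv; elim/big_rec: _ => [|i y _ hy]; first exact: inF0.
by apply: inFD => //; apply: inFZ.
Qed.

Lemma f_sum (R : realType) k n (B : 'M[int]_(k,n)) (f : 'rV[R]_n -> R)
  (I : finType) (c : I -> R) v :
  linear_on_F B f -> (forall i, inF B (v i)) ->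
  f (\sum_i c i *: v i) = \sum_i c i * f (v i).
Proof.
move=> hf hv.
have f0 : f 0 = 0.
  have := hf 1 0 0 (inF0 _ _ _ B) (inF0 _ _ _ B); rewrite scaler0 addr0 mul1r.
  move=> h; lra.
pose K (x : 'rV[R]_n) (r : R) := inF B x /\ f x = r.
suff [] : K (\sum_i c i *: v i) (\sum_i c i * f (v i)) by [].
elim/big_rec2: _ => [|i y1 y2 _ [h1 h2]]; first by split; [exact: inF0 | exact: f0].
by split; [apply: inFD => //; apply: inFZ | rewrite hf // h2].
Qed.

Set Implicit Arguments. Unset Strict Implicit.
Lemma pi_unique (R : realType) k n (B : 'M[int]_(k,n)) (G : 'M[R]_n) pi x p :
  orth_basis_inner_product G -> orth_proj B G pi -> inF B p ->
  (forall z, inF B z -> ip G (x - p) z = 0) -> p = pi x.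
Proof.
case=> _ hpos _ [hpi1 hpi2] hp hxp.
have hd : inF B (p - pi x) by apply: inFD => //; rewrite -scaleN1r; apply: inFZ.
have h1 := hpi2 x _ hd; have h2 := hxp _ hd.
rewrite !ipBl in h1 h2.
have h0 : ip G (p - pi x) (p - pi x) = 0 by rewrite ipBl; lra.
apply/eqP; rewrite -subr_eq0; apply/negPn/negP => hne.
by have := hpos _ hne; rewrite h0 ltxx.
Qed.

Lemma pi_id (R : realType) k n (B : 'M[int]_(k,n)) (G : 'M[R]_n) pi y :
  orth_basis_inner_product G -> orth_proj B G pi -> inF B y -> pi y = y.
Proof.
move=> hG hpi hy; symmetry; apply: (pi_unique hG hpi hy) => z _.
by rewrite subrr /ip !mul0mx mxE.
Qed.

Lemma pi_decomp (R : realType) k n (B : 'M[int]_(k,n)) (G : 'M[R]_n) pi y :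
  orth_basis_inner_product G -> orth_proj B G pi -> inF B y ->
  y = \sum_i y 0 i *: pi (e_ R i).
Proof.
move=> hG hpi hy.
rewrite -{1}(pi_id hG hpi hy); symmetry; apply: (pi_unique hG hpi).
  by apply: inF_sum => i; case: hpi.
move=> z hz.
have -> : y - \sum_i y 0 i *: pi (e_ R i) = \sum_i y 0 i *: (e_ R i - pi (e_ R i)).
  rewrite {1}(row_sum_delta y) -sumrB; apply: eq_bigr => i _.
  by rewrite scalerBr.
rewrite ip_sum big1 // => i _.
by case: hpi => _ ->; rewrite // mulr0.
Qed.

Unset Implicit Arguments. Set Strict Implicit.
Theorem corollary1 (R : realType) (n k : nat) (B : 'M[int]_(k, n))
  (G : 'M[R]_n) (pi : 'rV[R]_n -> 'rV[R]_n) :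
  (0 < n)%N ->
  Zindep B ->
  orth_basis_inner_product G ->
  zonotopal_lattice B ->
  orth_proj B G pi ->
  forall s : {ffun 'I_n -> int},
    covector_L B s <-> covector_Y B (fun i => pi (e_ R i)) s.
Proof.
move=> _ _ hG _ hpi s.
have [hGs hpos hoff0] := hG.
have hoff : forall i j : 'I_n, i != j -> G i j = 0.
  by move=> i j hij; rewrite -ip_delta hoff0.
have gpos : forall i, 0 < G i i.
  move=> i; rewrite -ip_delta; apply: hpos.
  apply/eqP => /matrixP /(_ 0 i); rewrite /e_ !mxE !eqxx /= => /eqP.
  by rewrite oner_eq0.
have [hpi1 hpi2] := hpi.
have orth : forall i w, inF B w -> ip G (pi (e_ R i)) w = G i i * w 0 i.
  move=> i w hw; have := hpi2 (e_ R i) w hw; rewrite ipBl (@ip_e R n G hoff) => h.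
  lra.
split.
  case=> v [[u hv] ->].
  pose wR : 'rV[R]_n := map_mx intr v.
  have hwF : inF B wR by exists (map_mx intr u); rewrite /wR hv map_mxM.
  exists (fun x => ip G x wR); split.
    by move=> c x y _ _; rewrite ipDl ipZl.
  apply/ffunP => i; rewrite !ffunE orth // sgzM (gtr0_sgz (gpos i)) mul1r /wR mxE.
  by rewrite sgz_int.
case=> f [hf ->].
pose w' : 'rV[R]_n := \row_i (f (pi (e_ R i)) / G i i).
pose w := pi w'.
have hwF : inF B w := hpi1 w'.
have claim : forall i, f (pi (e_ R i)) = G i i * w 0 i.
  move=> i; rewrite -orth // (@ipC R n G hoff).
  have := hpi2 w' (pi (e_ R i)) (hpi1 _); rewrite ipBl => h.
  have -> : ip G w (pi (e_ R i)) = ip G w' (pi (e_ R i)) by rewrite /w; lra.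
  rewrite (@ipE R n G hoff) {1}(pi_decomp hG hpi (hpi1 (e_ R i))) (@f_sum _ _ _ _ _ _ _ _ hf) //.
  apply: eq_bigr => j _; rewrite mxE divfK ?gt_eqF //.
  by rewrite mulrC.
have [v [hv hvs]] := rat_approx _ _ _ _ _ hwF.
exists v; split => //.
apply/ffunP => i; rewrite !ffunE claim sgzM (gtr0_sgz (gpos i)) mul1r.
by rewrite hvs.
Qed.
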